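(* Let $n\ge2$. Then: (i) for all $I,J\subseteq[1,n-1]$: $a_I+a_J\in A_n$ if and only if $I\cap J=\emptyset$; (ii) for every $I\subseteq[1,n-1]$ and every $J$ that is either a subset of $[1,n-1]$ or of the form $Z\cup\{n+1\}$ with $Z\subseteq[1,n-1]$: $a_I+a_J\in B_n$ if and only if $I\cap J=\emptyset$; moreover, for $I\subseteq[1,n-1]$, $a_{[1,n]}+a_I\in B_n$ if and only if $I=\emptyset$; (iii) for all $I,J\subseteq[1,n+1]$: $a_I+a_J\in C_n$ if and only if either $I\cap J=\emptyset$, or $I\cup J=[1,n]$ and $n\in I\cap J$.
   Context: $[x,y]=\{z\in\mathbb Z:x\le z\le y\}$. Fix an integer $n\ge2$ and positive integers $a_1,\dots,a_{n+1}$ with (C1) $a_{n+1}=a_1+\dots+a_{n-1}+2a_n$ and (C2) $a_{i+1}>2(a_1+\dots+a_i)$ for all $i\in[1,n-1]$. For $I\subseteq[1,n+1]$ put $a_I=\sum_{i\in I}a_i$ ($a_\emptyset=0$). Define $A_n=\{a_I:I\subseteq[1,n-1]\}$, $B_n=A_n\cup\{a_{[1,n]}\}\cup(A_n+a_{n+1})$, $C_n=\{a_I:I\subseteq[1,n+1]\}$. *)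

(* Defs.v *)
(* Indices 1..n+1 are represented in 'I_n.+2 (index 0 unused). *)
From mathcomp Require Import all_boot.
Set Implicit Arguments. Unset Strict Implicit. Unset Printing Implicit Defensive.

Definition iv (n x y : nat) : {set 'I_n.+2} := [set i : 'I_n.+2 | x <= i <= y].

Definition aS (n : nat) (a : nat -> nat) (I : {set 'I_n.+2}) : nat :=
  \sum_(i in I) a i.

Definition inA (n : nat) (a : nat -> nat) (x : nat) : Prop :=
  exists2 K : {set 'I_n.+2}, K \subset iv n 1 (n - 1) & x = aS a K.

(* x \in B_n = A_n u {a_[1,n]} u (A_n + a_{n+1}) *)
Definition inB (n : nat) (a : nat -> nat) (x : nat) : Prop :=
  [\/ inA n a x, x = aS a (iv n 1 n) | exists y, inA n a y /\ x = y + a n.+1].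

Definition inC (n : nat) (a : nat -> nat) (x : nat) : Prop :=
  exists2 K : {set 'I_n.+2}, K \subset iv n 1 n.+1 & x = aS a K.

(* Main.v *)
Require Import Defs.
From mathcomp Require Import all_boot zify.
Set Implicit Arguments. Unset Strict Implicit. Unset Printing Implicit Defensive.

Lemma aS_all n a (I : {set 'I_n.+2}) : aS a I = \sum_(i < n.+2) (i \in I) * a i.
Proof. rewrite /aS big_mkcond /=; apply: eq_bigr => i _; by case: (i \in I); rewrite ?mul1n ?mul0n. Qed.

Lemma aS_sub n a (I J : {set 'I_n.+2}) : I \subset J -> aS a I <= aS a J.
Proof.
move=> /subsetP H; rewrite !aS_all; apply: leq_sum => i _.
case E: (i \in I) => //=; by rewrite (H _ E) .
Qed.

Lemma aSUI n a (I J : {set 'I_n.+2}) : aS a (I :|: J) + aS a (I :&: J) = aS a I + aS a J.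
Proof.
rewrite !aS_all -!big_split; apply: eq_bigr => i _ /=; rewrite !inE.
by case: (i \in I); case: (i \in J); rewrite /= ?mul1n ?mul0n ?addn0.
Qed.

Lemma aS_disj n a (I J : {set 'I_n.+2}) : I :&: J = set0 -> aS a (I :|: J) = aS a I + aS a J.
Proof. move=> H; rewrite -aSUI H /aS big_set0 addn0 //. Qed.

Lemma aS0 n a : aS a (set0 : {set 'I_n.+2}) = 0.
Proof. by rewrite /aS big_set0. Qed.

Definition chi n (I : {set 'I_n.+2}) (i : nat) : nat := ((inord i : 'I_n.+2) \in I).

Lemma chi_val n (I : {set 'I_n.+2}) (x : 'I_n.+2) : chi I x = (x \in I).
Proof. by rewrite /chi inord_val. Qed.

Lemma chi_le1 n (I : {set 'I_n.+2}) i : chi I i <= 1.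
Proof. by rewrite /chi; case: (_ \in _). Qed.

Lemma in_iv n x y (I : {set 'I_n.+2}) (z : 'I_n.+2) : I \subset iv n x y -> z \in I -> x <= z <= y.
Proof. by move=> /subsetP H /H; rewrite inE. Qed.

Lemma aS_chi n a (I : {set 'I_n.+2}) : I \subset iv n 1 n ->
  aS a I = \sum_(1 <= i < n.+1) chi I i * a i.
Proof.
move=> HI; rewrite aS_all.
have -> : \sum_(i < n.+2) (i \in I) * a i = \sum_(0 <= i < n.+2) chi I i * a i.
  by rewrite big_mkord; apply: eq_bigr => i _; rewrite chi_val.
rewrite (big_cat_nat (n:=1)) // (big_cat_nat (m:=1) (n:=n.+1)) //= !big_nat1.
have c0 : chi I 0 = 0.
  rewrite /chi; case E: (_ \in I) => //; have := in_iv HI E; by rewrite inordK.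
have c1 : chi I n.+1 = 0.
  rewrite /chi; case E: (_ \in I) => //; have := in_iv HI E; rewrite inordK //; lia.
by rewrite c0 c1 mul0n add0n addn0.
Qed.


Lemma key n (a : nat -> nat) (hpos : forall i, 1 <= i <= n.+1 -> 0 < a i)
  (C2 : forall i, 1 <= i <= n - 1 -> 2 * (\sum_(1 <= j < i.+1) a j) < a i.+1) k :
  1 <= k <= n -> 2 * \sum_(1 <= j < k) a j < a k.
Proof.
case: k => [//|[|k]] Hk.
  by rewrite big_geq // hpos.
have := C2 k.+1; rewrite /=; apply; lia.
Qed.

Lemma sum_le2 (a c : nat -> nat) m : (forall i, 1 <= i < m -> c i <= 2) ->
  \sum_(1 <= i < m) c i * a i <= 2 * \sum_(1 <= i < m) a i.
Proof.
move=> H; rewrite big_distrr /= big_nat_cond [X in _ <= X]big_nat_cond.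
apply: leq_sum => i /andP [Hi _]; apply: leq_mul => //; exact: H.
Qed.

Lemma U n (a : nat -> nat) (hpos : forall i, 1 <= i <= n.+1 -> 0 < a i)
  (C2 : forall i, 1 <= i <= n - 1 -> 2 * (\sum_(1 <= j < i.+1) a j) < a i.+1) :
  forall k, k <= n -> forall c d : nat -> nat,
  (forall i, 1 <= i < k -> c i <= 2 /\ d i <= 2) ->
  \sum_(1 <= i < k.+1) c i * a i = \sum_(1 <= i < k.+1) d i * a i ->
  forall i, 1 <= i <= k -> c i = d i.
Proof.
elim=> [|k IH] Hk c d Hcd.
  by move=> _ i; lia.
rewrite big_nat_recr // [X in _ = X]big_nat_recr //= => E.
have Kk := key hpos C2 (k:=k.+1); rewrite /= in Kk.
have Kk' : 2 * \sum_(1 <= j < k.+1) a j < a k.+1 by apply: Kk; lia.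
have Lc : \sum_(1 <= i < k.+1) c i * a i < a k.+1.
  apply: leq_ltn_trans Kk'; apply: sum_le2 => i Hi; by case: (Hcd i); first lia.
have Ld : \sum_(1 <= i < k.+1) d i * a i < a k.+1.
  apply: leq_ltn_trans Kk'; apply: sum_le2 => i Hi; by case: (Hcd i); first lia.
have Ek : c k.+1 = d k.+1.
  move: E Lc Ld; set A := a k.+1; set X := \sum_(1 <= i < k.+1) c i * a i;
    set Y := \sum_(1 <= i < k.+1) d i * a i => E Lc Ld.
  have : (X + c k.+1 * A) %/ A = (Y + d k.+1 * A) %/ A by rewrite E.
  rewrite ![X + _]addnC ![Y + _]addnC !divnMDl ?divn_small ?addn0 //; lia.
move: E; rewrite Ek => /addIn E.
move=> i Hi; case: (ltngtP i k.+1) => Hi'; last by rewrite Hi'.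
- apply: IH => //; [lia| |lia]. move=> j Hj; apply: Hcd; lia.
- lia.
Qed.


Lemma chi2 n (I J : {set 'I_n.+2}) i : chi I i + chi J i <= 2.
Proof. have := chi_le1 I i; have := chi_le1 J i; lia. Qed.

Lemma lemD n (a : nat -> nat) (hpos : forall i, 1 <= i <= n.+1 -> 0 < a i)
  (C2 : forall i, 1 <= i <= n - 1 -> 2 * (\sum_(1 <= j < i.+1) a j) < a i.+1)
  (I J K : {set 'I_n.+2}) : I \subset iv n 1 n -> J \subset iv n 1 n -> K \subset iv n 1 n ->
  aS a I + aS a J = aS a K -> I :&: J = set0.
Proof.
move=> HI HJ HK; rewrite !aS_chi // -big_split /=.
have -> : \sum_(1 <= i < n.+1) (chi I i * a i + chi J i * a i) =
          \sum_(1 <= i < n.+1) (chi I i + chi J i) * a i.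
  by apply: eq_bigr => i _; rewrite mulnDl.
move/(U hpos C2 (leqnn n)) => H.
apply/setP => x; rewrite !inE; apply/negbTE/negP => /andP [xI xJ].
have := in_iv HI xI => Hx.
have := H (fun i _ => conj (chi2 I J i) (leq_trans (chi_le1 K i) (isT : 1 <= 2))) x Hx.
rewrite !chi_val xI xJ /=. have := chi_le1 K x. lia.
Qed.

Definition ee (n i : nat) : nat := if i == n then 2 else 1.

Lemma an1 n (a : nat -> nat) (hn : 2 <= n)
  (C1 : a n.+1 = \sum_(1 <= i < n) a i + 2 * a n) :
  a n.+1 = \sum_(1 <= i < n.+1) ee n i * a i.
Proof.
rewrite C1 big_nat_recr /=; last lia.
rewrite /ee eqxx; congr (_ + _); apply: eq_big_nat => i Hi.
have -> : (i == n) = false by apply/eqP; lia.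
by rewrite mul1n.
Qed.

Lemma lemE n (a : nat -> nat) (hn : 2 <= n) (hpos : forall i, 1 <= i <= n.+1 -> 0 < a i)
  (C1 : a n.+1 = \sum_(1 <= i < n) a i + 2 * a n)
  (C2 : forall i, 1 <= i <= n - 1 -> 2 * (\sum_(1 <= j < i.+1) a j) < a i.+1)
  (I J K : {set 'I_n.+2}) : I \subset iv n 1 n -> J \subset iv n 1 n -> K \subset iv n 1 n ->
  aS a I + aS a J = a n.+1 + aS a K ->
  I :|: J = iv n 1 n /\ (inord n : 'I_n.+2) \in I :&: J.
Proof.
move=> HI HJ HK; rewrite (an1 hn C1) !aS_chi // -!big_split /=.
have -> : \sum_(1 <= i < n.+1) (chi I i * a i + chi J i * a i) =
          \sum_(1 <= i < n.+1) (chi I i + chi J i) * a i.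
  by apply: eq_bigr => i _; rewrite mulnDl.
have -> : \sum_(1 <= i < n.+1) (ee n i * a i + chi K i * a i) =
          \sum_(1 <= i < n.+1) (ee n i + chi K i) * a i.
  by apply: eq_bigr => i _; rewrite mulnDl.
move/(U hpos C2 (leqnn n)) => H.
have {}H : forall i, 0 < i <= n -> chi I i + chi J i = ee n i + chi K i.
  apply: H => i Hi; split; first exact: chi2.
  rewrite /ee; have -> : (i == n) = false by apply/eqP; lia.
  have := chi_le1 K i; lia.
split.
  apply/setP => x; rewrite !inE; apply/idP/idP.
    by case/orP => [/(in_iv HI) | /(in_iv HJ)].
  move=> Hx; have := H x Hx; rewrite !chi_val.
  by case: (x \in I); case: (x \in J) => //=; rewrite /ee; case: (_ == _).
have := H n; rewrite /ee eqxx /chi !inE.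
case: (_ \in I); case: (_ \in J) => //= ; move=> /(_ _)/esym; lia.
Qed.


Lemma iv_sub n x y z : y <= z -> iv n x y \subset iv n x z.
Proof. move=> H; apply/subsetP => i; rewrite !inE => /andP [-> /leq_trans]; exact. Qed.

Lemma sub_iv n (I : {set 'I_n.+2}) x y z : y <= z -> I \subset iv n x y -> I \subset iv n x z.
Proof. move=> H HI; exact: subset_trans HI (iv_sub _ _ H). Qed.

Lemma aS_ivn n a : 1 <= n -> aS a (iv n 1 n) = \sum_(1 <= i < n) a i + a n.
Proof.
move=> hn; rewrite aS_chi ?subxx // big_nat_recr //=.
rewrite /chi inE inordK // hn leqnn mul1n; congr (_ + _).
apply: eq_big_nat => i Hi; rewrite inE inordK; last lia.
have -> : (1 <= i <= n) = true by lia. by rewrite mul1n.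
Qed.

Lemma aS_ivn1 n a : 1 <= n -> aS a (iv n 1 (n - 1)) = \sum_(1 <= i < n) a i.
Proof.
move=> hn; rewrite aS_chi ?iv_sub ?leq_subr // big_nat_recr //=.
rewrite /chi inE inordK //.
have -> : (1 <= n <= n - 1) = false by lia. rewrite mul0n addn0.
apply: eq_big_nat => i Hi; rewrite inE inordK; last lia.
have -> : (1 <= i <= n - 1) = true by lia. by rewrite mul1n.
Qed.

Lemma max_notin n x y (I : {set 'I_n.+2}) : y <= n -> I \subset iv n x y -> ord_max \notin I.
Proof. move=> Hy HI; apply/negP => /(in_iv HI) /=; lia. Qed.

Lemma max_dec n a (K : {set 'I_n.+2}) : K \subset iv n 1 n.+1 ->
  K :\ ord_max \subset iv n 1 n /\ aS a K = aS a (K :\ ord_max) + (ord_max \in K) * a n.+1.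
Proof.
move=> HK; split.
  apply/subsetP => x; rewrite !inE => /andP [Hx /(in_iv HK)].
  move: Hx; rewrite -val_eqE /= => Hx; lia.
case E: (ord_max \in K).
  by rewrite /aS (big_setD1 _ E) addnC mul1n.
by rewrite mul0n addn0; congr aS; apply/setP => x; rewrite !inE;
  case: eqP => // ->; rewrite E.
Qed.

Lemma aS_pos n a (hpos : forall i, 1 <= i <= n.+1 -> 0 < a i) (I : {set 'I_n.+2}) x :
  I \subset iv n 1 n.+1 -> x \in I -> 0 < aS a I.
Proof.
move=> HI xI; rewrite /aS (big_setD1 _ xI) /=; have := hpos x (in_iv HI xI); rewrite addn_gt0 => ->.
by [].
Qed.


Lemma nomax n (K : {set 'I_n.+2}) : K \subset iv n 1 n.+1 -> ord_max \notin K -> K \subset iv n 1 n.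
Proof.
move=> HK Hm; apply/subsetP => x xK; rewrite inE.
have := in_iv HK xK; have : x != ord_max by apply: contraNneq Hm => <-.
rewrite -val_eqE /=; lia.
Qed.

Lemma setI_max n (I J : {set 'I_n.+2}) : ord_max \notin I -> I :&: (J :\ ord_max) = set0 -> I :&: J = set0.
Proof.
move=> Hm H; apply/setP => x; move/setP: H => /(_ x); rewrite !inE.
by case: (x =P ord_max) => [->|]; rewrite ?(negbTE Hm).
Qed.

Lemma main3 n (a : nat -> nat) (hn : 2 <= n) (hpos : forall i, 1 <= i <= n.+1 -> 0 < a i)
  (C1 : a n.+1 = \sum_(1 <= i < n) a i + 2 * a n)
  (C2 : forall i, 1 <= i <= n - 1 -> 2 * (\sum_(1 <= j < i.+1) a j) < a i.+1)
  (I J : {set 'I_n.+2}) : I \subset iv n 1 n.+1 -> J \subset iv n 1 n.+1 ->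
         (inC n a (aS a I + aS a J) <->
          I :&: J = set0 \/ (I :|: J = iv n 1 n /\ (inord n : 'I_n.+2) \in I :&: J)).
Proof.
move=> HI HJ.
set S := \sum_(1 <= i < n) a i.
have hS : 2 * S < a n by apply: (key hpos C2); lia.
have Kb : forall K : {set 'I_n.+2}, K \subset iv n 1 n -> aS a K <= S + a n.
  by move=> K HK; rewrite -aS_ivn; [exact: aS_sub | lia].
split.
- case=> K HK E.
  have [HI0 EI] := max_dec a HI; have [HJ0 EJ] := max_dec a HJ; have [HK0 EK] := max_dec a HK.
  have KbK := Kb _ HK0; have KbI := Kb _ HI0; have KbJ := Kb _ HJ0.
  case bI: (ord_max \in I) EI => EI; case bJ: (ord_max \in J) EJ => EJ;
    case bK: (ord_max \in K) EK => EK; rewrite EI EJ EK in E.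
  + lia.
  + lia.
  + left; rewrite setIC; apply/setI_max; first by rewrite bJ.
    by apply: (lemD hpos C2 (nomax HJ _) HI0 HK0); [rewrite bJ|lia].
  + lia.
  + left; apply/setI_max; first by rewrite bI.
    by apply: (lemD hpos C2 (nomax HI _) HJ0 HK0); [rewrite bI|lia].
  + lia.
  + right; apply: (lemE hn hpos C1 C2 (nomax HI _) (nomax HJ _) HK0); rewrite ?bI ?bJ //; lia.
  + left; apply: (lemD hpos C2 (nomax HI _) (nomax HJ _) (nomax HK _)); rewrite ?bI ?bJ ?bK //; lia.
- case=> [H | [HU Hn]].
    exists (I :|: J); first by rewrite subUset HI HJ.
    by rewrite aS_disj.
  have Hm : ord_max \notin I :|: J by rewrite HU; apply: (max_notin (x:=1) (y:=n)).
  exists (((I :&: J) :\ inord n) :|: [set ord_max]).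
    rewrite subUset; apply/andP; split.
      apply/subsetP => x; rewrite !inE => /andP [_ /andP [xI _]]; exact: (in_iv HI xI).
    by apply/subsetP => x; rewrite !inE => /eqP -> /=; lia.
  rewrite setUC /aS big_setU1 /=; last first.
    apply/negP; rewrite !inE => /andP [_ /andP [mI _]]; move: Hm; by rewrite inE mI.
  rewrite -/(aS a _) -aSUI HU aS_ivn; last lia.
  rewrite /aS (big_setD1 _ Hn) /= inordK // -/(aS a _) C1; lia.
Qed.


Theorem lemma3p8 (n : nat) (a : nat -> nat)
  (hn : 2 <= n)
  (hpos : forall i, 1 <= i <= n.+1 -> 0 < a i)
  (C1 : a n.+1 = \sum_(1 <= i < n) a i + 2 * a n)
  (C2 : forall i, 1 <= i <= n - 1 -> 2 * (\sum_(1 <= j < i.+1) a j) < a i.+1) :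
  [/\ (* (i) *)
      (forall I J : {set 'I_n.+2}, I \subset iv n 1 (n - 1) -> J \subset iv n 1 (n - 1) ->
         (inA n a (aS a I + aS a J) <-> I :&: J = set0)),
      (* (ii) *)
      (forall I J : {set 'I_n.+2}, I \subset iv n 1 (n - 1) ->
         (J \subset iv n 1 (n - 1) \/
          exists2 Z : {set 'I_n.+2}, Z \subset iv n 1 (n - 1) & J = Z :|: [set ord_max]) ->
         (inB n a (aS a I + aS a J) <-> I :&: J = set0)),
      (forall I : {set 'I_n.+2}, I \subset iv n 1 (n - 1) ->
         (inB n a (aS a (iv n 1 n) + aS a I) <-> I = set0))
    & (* (iii) *)
      (forall I J : {set 'I_n.+2}, I \subset iv n 1 n.+1 -> J \subset iv n 1 n.+1 ->
         (inC n a (aS a I + aS a J) <->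
          I :&: J = set0 \/ (I :|: J = iv n 1 n /\ (inord n : 'I_n.+2) \in I :&: J)))].
Proof.
set S := \sum_(1 <= i < n) a i.
have hS : 2 * S < a n by apply: (key hpos C2); lia.
have Kb : forall K : {set 'I_n.+2}, K \subset iv n 1 (n - 1) -> aS a K <= S.
  by move=> K HK; rewrite /S -aS_ivn1; [exact: aS_sub | lia].
have sn : n - 1 <= n by lia.
have ivn : aS a (iv n 1 n) = S + a n by rewrite aS_ivn //; lia.
have an0 : 0 < a n by apply: hpos; lia.
split.
- move=> I J HI HJ; split.
    by case=> K HK E; apply: (lemD hpos C2 (sub_iv sn HI) (sub_iv sn HJ) (sub_iv sn HK)).
  by move=> H; exists (I :|: J); [rewrite subUset HI HJ | rewrite aS_disj].
- move=> I J HI [HJ | [Z HZ ->]].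
    have := Kb _ HI; have := Kb _ HJ => b1 b2.
    split.
      case=> [[K HK E] | E | [y [_ E]]].
      + exact: (lemD hpos C2 (sub_iv sn HI) (sub_iv sn HJ) (sub_iv sn HK)).
      + lia.
      + lia.
    by move=> H; apply: Or31; exists (I :|: J); [rewrite subUset HI HJ | rewrite aS_disj].
  have mI := max_notin (leq_subr 1 n) HI; have mZ := max_notin (leq_subr 1 n) HZ.
  have EZ : aS a (Z :|: [set ord_max]) = aS a Z + a n.+1.
    by rewrite setUC /aS big_setU1 //= addnC.
  have EI : I :&: (Z :|: [set ord_max]) = I :&: Z.
    apply/setP => x; rewrite !inE; case: (x =P ord_max) => [->|]; by rewrite ?(negbTE mI) ?orbF.
  rewrite EZ EI; have := Kb _ HI; have := Kb _ HZ => b1 b2.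
  split.
    case=> [[K HK E] | E | [y [[K HK Ey] E]]].
    + have := Kb _ HK; lia.
    + lia.
    + apply: (lemD hpos C2 (sub_iv sn HI) (sub_iv sn HZ) (sub_iv sn HK)); lia.
  move=> H; apply: Or33; exists (aS a (I :|: Z)); split; last by rewrite aS_disj // addnA.
  by exists (I :|: Z); rewrite // subUset HI HZ.
- move=> I HI; have bI := Kb _ HI; rewrite ivn; split.
    case=> [[K HK E] | E | [y [_ E]]].
    + have := Kb _ HK; lia.
    + apply/setP => x; rewrite in_set0; apply/negbTE/negP => xI.
      have := aS_pos hpos (sub_iv (leq_trans sn (leqnSn n)) HI) xI; lia.
    + lia.
  by move=> ->; rewrite aS0 addn0 -ivn; apply: Or32.
- exact: main3.
Qed.
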